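(* Fix an integer $k \geq 1$ and let $V=\{0,\ldots,k\}$. Let $\varphi$ be a nondegenerate monotone Boolean function on $V$. Then $$\mathrm{eul}(\varphi) = \mu_{\mathrm{CNF}}(\hat{0},\hat{1}) = (-1)^k\, \mu_{\mathrm{DNF}}(\hat{0},\hat{1}),$$ where $\mu_{\mathrm{CNF}}$ (resp. $\mu_{\mathrm{DNF}}$) is the Möbius function of the CNF lattice $L^\varphi_{\mathrm{CNF}}$ (resp. the DNF lattice $L^\varphi_{\mathrm{DNF}}$) of $\varphi$, and $\hat{0}$, $\hat{1}$ denote the least and greatest elements of the respective lattice.
   Context: A valuation of $V$ is a subset $\nu\subseteq V$; for $l\in V$, $\nu^{(l)}$ denotes $\nu$ with the membership of $l$ flipped. A Boolean function on $V$ is a map $\varphi:2^V\to\{\text{false},\text{true}\}$; $\nu\models\varphi$ means $\varphi(\nu)=\text{true}$. It is monotone if $\nu\subseteq\nu'$ and $\nu\models\varphi$ imply $\nu'\models\varphi$. $\varphi$ depends on $l$ if $\varphi(\nu)\neq\varphi(\nu^{(l)})$ for some $\nu$; $\mathrm{dep}(\varphi)$ is the set of such $l$; $\varphi$ is nondegenerate if $\mathrm{dep}(\varphi)=V$. The Euler characteristic is $\mathrm{eul}(\varphi)=\sum_{\nu\models\varphi}(-1)^{|\nu|}$. A monotone $\varphi$ has a unique minimized CNF $C_0\wedge\cdots\wedge C_n$ and a unique minimized DNF $C'_0\vee\cdots\vee C'_m$ (no clause containing another), each clause viewed as the set of its variables. The CNF lattice $L^\varphi_{\mathrm{CNF}}$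 is the poset whose elements are the sets $d_{\mathbf s}=\bigcup_{i\in\mathbf s}C_i$ for $\mathbf s\subseteq\{0,\ldots,n\}$, ordered by reversed set inclusion; its greatest element $\hat 1$ is $\emptyset$ and its least element $\hat0$ is $\mathrm{dep}(\varphi)$. The DNF lattice $L^\varphi_{\mathrm{DNF}}$ is defined identically from the DNF clauses $C'_i$ (sets $d'_{\mathbf s}=\bigcup_{i\in\mathbf s}C'_i$, reversed inclusion). For a finite poset $P$, the Möbius function is defined on pairs $u\leq v$ by $\mu_P(u,u)=1$ and $\mu_P(u,v)=-\sum_{u<w\leq v}\mu_P(w,v)$ for $u<v$. *)

(* Defs.v *)
From mathcomp Require Import all_boot all_order all_algebra.
Set Implicit Arguments. Unset Strict Implicit. Unset Printing Implicit Defensive.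
Import GRing.Theory Num.Theory.
Local Open Scope ring_scope.

Section BoolFun.
Variable V : finType.

(* valuations are {set V}; a Boolean function is a map {set V} -> bool *)
Definition flip (nu : {set V}) (l : V) : {set V} :=
  if l \in nu then nu :\ l else l |: nu.

Definition monotone (phi : {set V} -> bool) : Prop :=
  forall nu nu' : {set V}, nu \subset nu' -> phi nu -> phi nu'.

Definition depends_on (phi : {set V} -> bool) (l : V) : Prop :=
  exists nu : {set V}, phi nu != phi (flip nu l).

Definition nondeg_bf (phi : {set V} -> bool) : Prop :=
  forall l : V, depends_on phi l.

Definition eul (phi : {set V} -> bool) : int :=
  \sum_(nu : {set V} | phi nu) (-1) ^+ #|nu|.

Definition antichain (F : {set {set V}}) : Prop :=
  forall C D, C \in F -> D \in F -> C \subset D -> C = D.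

Definition is_min_CNF (phi : {set V} -> bool) (F : {set {set V}}) : Prop :=
  antichain F /\ forall nu, phi nu = [forall C in F, [exists x in C, x \in nu]].

Definition is_min_DNF (phi : {set V} -> bool) (F : {set {set V}}) : Prop :=
  antichain F /\ forall nu, phi nu = [exists C in F, C \subset nu].

Definition clause_lattice (F : {set {set V}}) : {set {set V}} :=
  [set (\bigcup_(C in s) C : {set V}) | s : {set {set V}} in powerset F].

(* least element hat0 (union of all clauses) and greatest element hat1 = set0
   for the reversed inclusion order *)
Definition hat0 (F : {set {set V}}) : {set V} := \bigcup_(C in F) C.
Definition hat1 : {set V} := set0.
Arguments hat1 : clear implicits.

(* Moebius function of the poset L ordered by reversed inclusion
   (u <= v iff v \subset u), computed with fuel:
   mu(u,u) = 1, mu(u,v) = - \sum_(u < w <= v) mu(w,v) for u < v, 0 otherwise. *)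
Fixpoint mob_fuel (L : {set {set V}}) (n : nat) (u v : {set V}) : int :=
  match n with
  | 0%N => 0
  | n'.+1 =>
      if u == v then 1
      else if v \proper u then
        - \sum_(w in L | (v \subset w) && (w \proper u)) mob_fuel L n' w v
      else 0
  end.

Definition mobius (L : {set {set V}}) (u v : {set V}) : int :=
  mob_fuel L #|u|.+1 u v.

End BoolFun.

(* Main.v *)
Require Import Defs.
From mathcomp Require Import all_boot all_order all_algebra.
Import GRing.Theory Num.Theory.
Local Open Scope ring_scope.

Module Helpers.
Set Implicit Arguments. Unset Strict Implicit.
Section Aux.
Variable T : finType.

Lemma sqr_sign (n : nat) : (-1) ^+ n * (-1) ^+ n = 1 :> int.
Proof. by rewrite -exprMn mulrNN mulr1 expr1n. Qed.

Lemma alt_sum (A : {set T}) :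
  \sum_(s : {set T} | s \subset A) (-1) ^+ #|s| = (A == set0)%:R :> int.
Proof.
case: (set_0Vmem A) => [->|[a aA]].
  rewrite eqxx (eq_bigl (pred1 set0)) ?big_pred1_eq ?cards0 //.
  by move=> s; rewrite subset0.
have -> : (A == set0) = false by apply/negbTE/set0Pn; exists a.
set S := (X in X = _).
pose h (s : {set T}) := if a \in s then s :\ a else a |: s.
have hK : involutive h.
  move=> s; rewrite /h; case: (boolP (a \in s)) => ha.
    by rewrite !inE eqxx /= setD1K.
  by rewrite setU11 setU1K.
have hS : S = - S.
  rewrite {1}/S (reindex_inj (inv_inj hK)) /= -sumrN.
  apply: eq_big => s.
    rewrite /h; case: ifP => ha.
      apply/idP/idP => H; last by apply: subset_trans H; apply: subD1set.
      by rewrite -(setD1K ha) subUset sub1set aA.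
    by rewrite subUset sub1set aA.
  move=> _; rewrite /h; case: ifP => ha.
    by rewrite [in RHS](cardsD1 a s) ha exprS mulN1r opprK.
  by rewrite cardsU1 ha /= exprS mulN1r.
have : S *+ 2 = 0 by rewrite mulr2n {1}hS addNr.
by move/eqP; rewrite mulrn_eq0 /= => /eqP.
Qed.

End Aux.
Section Aux2.
Variable T : finType.
Lemma setC_eqT (A : {set T}) : (~: A == set0) = (A == setT).
Proof.
by apply/eqP/eqP => h; [rewrite -[A]setCK h setC0 | rewrite h setCT].
Qed.

Definition dU (s : {set {set T}}) : {set T} := \bigcup_(C in s) C.

Lemma incl_excl (F : {set {set T}}) :
  \sum_(nu : {set T} | [forall C in F, [exists x in C, x \in nu]]) (-1) ^+ #|nu|
  = \sum_(s : {set {set T}} | (s \subset F) && (dU s == setT)) (-1) ^+ #|s| :> int.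
Proof.
transitivity (\sum_(nu : {set T}) \sum_(s : {set {set T}})
   (if (s \subset F) && (nu \subset ~: dU s) then (-1) ^+ #|s| * (-1) ^+ #|nu| else 0) : int).
  rewrite big_mkcond /=; apply: eq_bigr => nu _.
  rewrite -big_mkcond /= -big_distrl /=.
  pose G := [set C in F | [disjoint C & nu]].
  have E : forall s : {set {set T}}, ((s \subset F) && (nu \subset ~: dU s)) = (s \subset G).
    move=> s; apply/andP/subsetP => [[sF nus] C Cs|H].
      rewrite inE (subsetP sF _ Cs) /=.
      rewrite disjoint_sym disjoint_subset; apply: subset_trans nus _.
      apply/subsetP => x; rewrite !inE => /negP xn; apply/negP => xC; apply: xn; by apply/bigcupP; exists C.
    split; first by apply/subsetP => C /H; rewrite inE => /andP[].
    rewrite subsetC /dU; apply/bigcupsP => C /H; rewrite inE => /andP[_].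
    move=> /pred0P dis; apply/subsetP => x xC; rewrite inE; apply/negP => xn; by have := dis x; rewrite /= xC xn.
  rewrite (eq_bigl _ _ E) alt_sum.
  have -> : (G == set0) = [forall C in F, [exists x in C, x \in nu]].
    apply/eqP/forall_inP => [G0 C CF|H].
      case: (boolP [exists x in C, x \in nu]) => // /exists_inPn HC.
      have : C \in G.
        rewrite inE CF /=; apply/pred0P => x /=; case xC: (x \in C) => //=.
        exact/negbTE/HC.
      by rewrite G0 inE.
    apply/eqP; apply/set0Pn => -[C]; rewrite inE => /andP[CF].
    case/exists_inP: (H C CF) => x xC xnu /pred0P /(_ x) /=.
    by rewrite xC xnu.
  by case: ifP; rewrite ?mul1r ?mul0r.
rewrite exchange_big /= [RHS]big_mkcond /=; apply: eq_bigr => s _.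
case sF: (s \subset F) => /=; last by rewrite big1.
rewrite -big_mkcond /= -big_distrr /= alt_sum setC_eqT.
by case: ifP; rewrite ?mulr1 ?mulr0.
Qed.

End Aux2.
Section Mob.
Variable T : finType.

Lemma mob_fuelE (L : {set {set T}}) n m (u v : {set T}) :
  (#|u| < n)%N -> (#|u| < m)%N -> mob_fuel L n u v = mob_fuel L m u v.
Proof.
elim: n m u => [|n IH] [|m] u //= hn hm.
case: eqP => // _; case: ifP => // _; congr (- _).
apply: eq_bigr => w /andP[_ /andP[_ wu]].
have hw := proper_card wu.
by apply: IH; apply: leq_trans hw _.
Qed.

Lemma mob_fuelS (L : {set {set T}}) n (u v : {set T}) :
  mob_fuel L n.+1 u v = if u == v then 1 else if v \proper u then
        - \sum_(w in L | (v \subset w) && (w \proper u)) mob_fuel L n w v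
      else 0.
Proof. by []. Qed.

Lemma mob_rec (L : {set {set T}}) (u : {set T}) : u != set0 ->
  mobius L u set0 = - \sum_(w in L | w \proper u) mobius L w set0.
Proof.
move=> u0; rewrite {1}/mobius mob_fuelS (negbTE u0) proper0 u0.
congr (- _); apply: eq_big => [w|w wu]; first by rewrite sub0set.
move/andP: wu => [_ /andP[_ wu]]; rewrite /mobius; apply: mob_fuelE; [exact: proper_card wu | exact: ltnSn].
Qed.

Definition fS (F : {set {set T}}) (u : {set T}) : int :=
  \sum_(s : {set {set T}} | (s \subset F) && (dU s == u)) (-1) ^+ #|s|.

Lemma dU_in (F : {set {set T}}) (s : {set {set T}}) : s \subset F -> dU s \in clause_lattice F.
Proof. by move=> sF; apply/imsetP; exists s; rewrite ?powersetE. Qed.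

Lemma mob_fS (F : {set {set T}}) : set0 \notin F ->
  forall u, u \in clause_lattice F -> mobius (clause_lattice F) u set0 = fS F u.
Proof.
move=> F0 u; have [n] := ubnP #|u|; elim: n u => // n IH u hu uL.
case: (eqVneq u set0) => [->|u0].
  rewrite /mobius /= eqxx /fS.
  have E : forall s : {set {set T}}, ((s \subset F) && (dU s == set0)) = (s == set0).
    move=> s; apply/idP/eqP => [/andP[sF /eqP ds]|->]; last by rewrite sub0set /dU big_set0 eqxx.
    apply/eqP; rewrite -subset0; apply/subsetP => C Cs.
    have : C \subset set0 by rewrite -ds /dU (bigcup_sup C).
    rewrite subset0 => /eqP C0; move: F0; by rewrite -C0 (subsetP sF _ Cs).
  by rewrite (eq_bigl _ _ E) big_pred1_eq cards0 expr0.
rewrite mob_rec //.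
have -> : \sum_(w in clause_lattice F | w \proper u) mobius (clause_lattice F) w set0
        = \sum_(w in clause_lattice F | w \proper u) fS F w.
  apply: eq_bigr => w /andP[wL wu]; apply: IH => //.
  by apply: leq_trans (proper_card wu) _.
apply/eqP; rewrite eq_sym -addr_eq0.
have -> : fS F u + \sum_(w in clause_lattice F | w \proper u) fS F w
        = \sum_(w | (w \in clause_lattice F) && (w \subset u)) fS F w.
  rewrite [RHS](bigD1 u) /=; last by rewrite uL subxx.
  congr (_ + _); apply: eq_bigl => w; rewrite properEneq.
  by case: (w \in _); case: (w != u); case: (w \subset u).
have -> : \sum_(w | (w \in clause_lattice F) && (w \subset u)) fS F w
   = \sum_(s : {set {set T}} | (s \subset F) && (dU s \subset u)) (-1) ^+ #|s|.
  rewrite (partition_big (@dU T) (fun w => (w \in clause_lattice F) && (w \subset u))); last first.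
    by move=> s /andP[sF su]; rewrite dU_in.
  apply: eq_bigr => w /andP[_ wu]; apply: eq_bigl => s.
  by case: (eqVneq (dU s) w) => [->|_]; rewrite ?andbT ?andbF ?wu ?andbT.
pose G := [set C in F | C \subset u].
have E : forall s : {set {set T}}, ((s \subset F) && (dU s \subset u)) = (s \subset G).
  move=> s; apply/andP/subsetP => [[sF su] C Cs|H].
    by rewrite inE (subsetP sF _ Cs) /= (subset_trans _ su) // /dU (bigcup_sup C).
  split; first by apply/subsetP => C /H; rewrite inE => /andP[].
  by apply/bigcupsP => C /H; rewrite inE => /andP[].
rewrite (eq_bigl _ _ E) alt_sum.
case/imsetP: uL => s0; rewrite powersetE => s0F u_eq.
case: (set_0Vmem s0) => [s00|[C Cs0]].
  by move: u0; rewrite u_eq s00 big_set0 eqxx.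
have -> : (G == set0) = false.
  apply/negbTE/set0Pn; exists C; rewrite inE (subsetP s0F _ Cs0) /= u_eq.
  exact: (bigcup_sup C).
by [].
Qed.
End Mob.
End Helpers.
Import Helpers.
Unset Implicit Arguments.
Theorem lemma3p8 (k : nat) (hk : (1 <= k)%N)
  (phi : {set 'I_k.+1} -> bool)
  (hmon : monotone phi) (hnd : nondeg_bf phi)
  (cnf dnf : {set {set 'I_k.+1}})
  (hcnf : is_min_CNF phi cnf) (hdnf : is_min_DNF phi dnf) :
  eul phi = mobius (clause_lattice cnf) (hat0 cnf) (hat1 _) /\
  mobius (clause_lattice cnf) (hat0 cnf) (hat1 _)
    = (-1) ^+ k * mobius (clause_lattice dnf) (hat0 dnf) (hat1 _).
Proof.
set T := 'I_k.+1.
have flipE : forall (nu : {set T}) l x, x != l -> (x \in flip nu l) = (x \in nu).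
  move=> nu l x xl; rewrite /flip; case: ifP => _; rewrite !inE.
    by rewrite xl.
  by rewrite (negbTE xl).
case: hcnf => _ hc; case: hdnf => _ hd.
have cnfT : hat0 cnf = setT.
  apply/eqP; rewrite eqEsubset subsetT /=; apply/subsetP => l _.
  apply/negPn/negP => hl; have [nu] := hnd l; rewrite !hc.
  rewrite (eq_forallb_in (P2 := fun C : {set T} => [exists x in C, x \in flip nu l])) ?eqxx //.
  move=> C CF; apply: eq_existsb_in => x xC; rewrite flipE //.
  apply/eqP => xl; move/negP: hl; apply; rewrite -xl /hat0; apply/bigcupP; by exists C.
have dnfT : hat0 dnf = setT.
  apply/eqP; rewrite eqEsubset subsetT /=; apply/subsetP => l _.
  apply/negPn/negP => hl; have [nu] := hnd l; rewrite !hd.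
  rewrite (eq_existsb_in (P2 := fun C : {set T} => C \subset flip nu l)) ?eqxx //.
  move=> C CF; apply/subsetP/subsetP => h x xC.
    rewrite flipE ?h //; apply/eqP => xl; move/negP: hl; apply; rewrite -xl /hat0; apply/bigcupP; by exists C.
  rewrite -(flipE nu l) ?h //; apply/eqP => xl; move/negP: hl; apply; rewrite -xl /hat0; apply/bigcupP; by exists C.
have cnf0 : set0 \notin cnf.
  apply/negP => h; have [nu] := hnd ord0.
  have H : forall mu, phi mu = false.
    move=> mu; rewrite hc; apply/negbTE/negP => /forall_inP /(_ _ h) /exists_inP [x].
    by rewrite inE.
  by rewrite !H.
have dnf0 : set0 \notin dnf.
  apply/negP => h; have [nu] := hnd ord0.
  have H : forall mu, phi mu = true.
    by move=> mu; rewrite hd; apply/exists_inP; exists set0; rewrite ?sub0set.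
  by rewrite !H.
have mobC : mobius (clause_lattice cnf) (hat0 cnf) (hat1 _) =
   \sum_(s : {set {set T}} | (s \subset cnf) && (dU s == setT)) (-1) ^+ #|s|.
  rewrite /hat1 mob_fS // ?cnfT //; rewrite -cnfT; exact: dU_in.
have mobD : mobius (clause_lattice dnf) (hat0 dnf) (hat1 _) =
   \sum_(s : {set {set T}} | (s \subset dnf) && (dU s == setT)) (-1) ^+ #|s|.
  rewrite /hat1 mob_fS // ?dnfT //; rewrite -dnfT; exact: dU_in.
have eulC : eul phi = \sum_(s : {set {set T}} | (s \subset cnf) && (dU s == setT)) (-1) ^+ #|s|.
  by rewrite -incl_excl /eul; apply: eq_bigl => nu; rewrite hc.
split; first by rewrite mobC eulC.
rewrite mobC mobD -eulC -incl_excl.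
set psi := fun mu : {set T} => [forall C in dnf, [exists x in C, x \in mu]].
have tot : \sum_(nu : {set T}) (-1) ^+ #|nu| = 0%R :> int.
  rewrite -(eq_bigl _ _ (fun nu : {set T} => subsetT nu)) alt_sum.
  by have -> : ([set: T] == set0) = false by apply/negbTE/set0Pn; exists ord0.
have compl : forall nu : {set T}, ~~ phi nu = psi (~: nu).
  move=> nu; rewrite hd /psi.
  apply/negP/forall_inP => [nP C CF|H /exists_inP [C CF Cnu]].
    have : ~~ (C \subset nu).
      by apply/negP => h; apply: nP; apply/exists_inP; exists C.
    case/subsetPn => x xC xn; apply/exists_inP; exists x => //; by rewrite inE.
  have := H C CF; case/exists_inP => x xC; rewrite inE => /negP; apply.
  exact: (subsetP Cnu).
have sgC : forall mu : {set T}, (-1) ^+ #|~: mu| = (-1) ^+ k.+1 * (-1) ^+ #|mu| :> int.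
  move=> mu; have hcm := cardsC mu; rewrite card_ord in hcm.
  have -> : (-1) ^+ k.+1 = (-1) ^+ (#|mu| + #|~: mu|) :> int by rewrite hcm.
  by rewrite exprD mulrAC sqr_sign mul1r.
have : eul phi + \sum_(nu | ~~ phi nu) (-1) ^+ #|nu| = 0.
  by rewrite -[RHS]tot [in RHS](bigID phi) /=.
rewrite (eq_bigl _ _ compl) (reindex_inj (@setC_inj T)) /=.
under eq_bigl => mu do rewrite setCK.
under eq_bigr => mu _ do rewrite sgC.
move/eqP; rewrite addr_eq0 -big_distrr /= => /eqP ->.
by rewrite exprS mulN1r mulNr opprK.
Qed.
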